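(* For every hypergraph $\mathcal{H}=(Q,\mathcal{S})$ with all hyperedges nonempty and $S_n=Q$, the graph $G_{\mathcal{H}}$ is $(2P_1+2P_2)$-free, $3P_2$-free and $2P_3$-free.
   Context: A hypergraph $\mathcal{H}=(Q,\mathcal{S})$ has element set $Q=\{q_1,\dots,q_m\}$ and hyperedges $\mathcal{S}=\{S_1,\dots,S_n\}$, $S_j\subseteq Q$. The graph $G_{\mathcal{H}}$ has vertex set $Q\cup\mathcal{S}\cup\mathcal{S}'\cup\{t_1,t_2\}$, where $\mathcal{S}'=\{S_1',\dots,S_n'\}$ is a set of $n$ new vertices, and edges: $q_iS_j$ and $q_iS_j'$ whenever $q_i\in S_j$; $S_jS_\ell'$ for all $j,\ell\in\{1,\dots,n\}$; $q_hq_i$ for all distinct $h,i$ (so $Q$ is a clique); $t_1S_j$ and $t_2S_j'$ for all $j$. There are no other edges. $+$ denotes disjoint union, $sG$ the disjoint union of $s$ copies of $G$, $P_r$ the path on $r$ vertices; $H$-free means no induced subgraph isomorphic to $H$. *)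

(* Defs.v *)
From mathcomp Require Import all_boot.
Set Implicit Arguments. Unset Strict Implicit. Unset Printing Implicit Defensive.

Definition induced_free (VH : finType) (eH : rel VH) (V : finType) (eG : rel V) : Prop :=
  ~ exists f : VH -> V, injective f /\ forall x y, eH x y = eG (f x) (f y).

Definition path_rel (r : nat) : rel 'I_r :=
  fun i j => (i.+1 == j :> nat) || (j.+1 == i :> nat).

Definition sum_rel (T1 T2 : finType) (e1 : rel T1) (e2 : rel T2) : rel (T1 + T2)%type :=
  fun x y => match x, y with
             | inl a, inl b => e1 a b
             | inr a, inr b => e2 a b
             | _, _ => false
             end.

Definition V_2P1_2P2 : finType := (('I_1 + 'I_1) + ('I_2 + 'I_2))%type.
Definition e_2P1_2P2 : rel V_2P1_2P2 :=
  sum_rel (sum_rel (@path_rel 1) (@path_rel 1)) (sum_rel (@path_rel 2) (@path_rel 2)).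
Definition V_3P2 : finType := (('I_2 + 'I_2) + 'I_2)%type.
Definition e_3P2 : rel V_3P2 :=
  sum_rel (sum_rel (@path_rel 2) (@path_rel 2)) (@path_rel 2).
Definition V_2P3 : finType := ('I_3 + 'I_3)%type.
Definition e_2P3 : rel V_2P3 := sum_rel (@path_rel 3) (@path_rel 3).

(* The graph G_H of a hypergraph with element set Q = 'I_m and hyperedges
   S : 'I_n -> {set 'I_m}.  Vertices:
     inl (inl q)        : element q of Q
     inl (inr j)        : hyperedge vertex S_j
     inr (inl l)        : copy vertex S'_l
     inr (inr false)    : t1
     inr (inr true)     : t2 *)
Definition GH_vertex (m n : nat) : finType := (('I_m + 'I_n) + ('I_n + bool))%type.

Definition GH_adj0 (m n : nat) (S : 'I_n -> {set 'I_m}) (x y : GH_vertex m n) : bool :=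
  match x, y with
  | inl (inl q), inl (inl q') => q != q'
  | inl (inl q), inl (inr j) => q \in S j
  | inl (inl q), inr (inl l) => q \in S l
  | inl (inr _), inr (inl _) => true
  | inl (inr _), inr (inr false) => true
  | inr (inl _), inr (inr true) => true
  | _, _ => false
  end.

Definition GH_adj (m n : nat) (S : 'I_n -> {set 'I_m}) : rel (GH_vertex m n) :=
  fun x y => GH_adj0 S x y || GH_adj0 S y x.

(* Main.v *)
Require Import Defs.
From mathcomp Require Import all_boot.

Definition isQ {m n : nat} (v : GH_vertex m n) : bool :=
  if v is inl (inl _) then true else false.

Ltac fin :=
  move=> *;
  repeat match goal with H : is_true (~~ ((?x != ?y) || _)) |- _ =>
     move: H; rewrite negb_or !negbK => /andP[/eqP ? _]; subst end;
  repeat match goal with H : is_true (?x \in ?A), H' : is_true (?x \notin ?A) |- _ =>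
     by rewrite H in H' end;
  repeat match goal with H : is_true (?x != ?x) |- _ => by rewrite eqxx in H end;
  repeat match goal with H : is_true ((?x != ?x) || _) |- _ => by rewrite eqxx in H end.

Lemma core (m n : nat) (S : 'I_n -> {set 'I_m}) (a b c d : GH_vertex m n) :
  a != c -> a != d -> b != c -> b != d -> GH_adj S a b -> GH_adj S c d ->
  ~~ GH_adj S a c -> ~~ GH_adj S a d -> ~~ GH_adj S b c -> ~~ GH_adj S b d ->
  (isQ a && isQ b && ~~ isQ c && ~~ isQ d) || (~~ isQ a && ~~ isQ b && isQ c && isQ d).
Proof.
case: a => [[qa|ja]|[la|[]]]; case: b => [[qb|jb]|[lb|[]]];
case: c => [[qc|jc]|[lc|[]]]; case: d => [[qd|jd]|[ld|[]]];
rewrite /GH_adj /= ?orbF ?orbT //=; fin.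


Qed.

Lemma nonq (m n : nat) (S : 'I_n -> {set 'I_m}) (u v x y : GH_vertex m n) :
  ~~ isQ u -> ~~ isQ v -> ~~ isQ x -> ~~ isQ y -> u != v -> u != x -> u != y ->
  v != x -> v != y -> GH_adj S x y -> ~~ GH_adj S u v ->
  ~~ GH_adj S u x -> ~~ GH_adj S u y -> ~~ GH_adj S v x -> ~~ GH_adj S v y -> False.
Proof.
case: u => [[qa|ja]|[la|[]]]; case: v => [[qb|jb]|[lb|[]]];
case: x => [[qc|jc]|[lc|[]]]; case: y => [[qd|jd]|[ld|[]]];
rewrite /GH_adj /= ?orbF ?orbT //=.
Qed.

Arguments core {m n S a b c d}.
Arguments nonq {m n S u v x y}.

Theorem lemma28 (m n : nat) (S : 'I_n.+1 -> {set 'I_m})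
  (Hne : forall j, S j != set0)
  (Hlast : S ord_max = [set: 'I_m]) :
  [/\ induced_free e_2P1_2P2 (GH_adj S),
      induced_free e_3P2 (GH_adj S)
    & induced_free e_2P3 (GH_adj S)].
Proof.
split.
- move=> [f [inj H]].
  have A x y : e_2P1_2P2 x y -> GH_adj S (f x) (f y) by rewrite -H.
  have N x y : ~~ e_2P1_2P2 x y -> ~~ GH_adj S (f x) (f y) by rewrite -H.
  have D x y : x != y -> f x != f y by rewrite (inj_eq inj).
  pose u : V_2P1_2P2 := inl (inl ord0).
  pose v : V_2P1_2P2 := inl (inr ord0).
  pose a : V_2P1_2P2 := inr (inl ord0).
  pose b : V_2P1_2P2 := inr (inl ord_max).
  pose c : V_2P1_2P2 := inr (inr ord0).
  pose d : V_2P1_2P2 := inr (inr ord_max).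
  have := core (D a c isT) (D a d isT) (D b c isT) (D b d isT) (A a b isT) (A c d isT)
    (N a c isT) (N a d isT) (N b c isT) (N b d isT).
  case/orP => /andP [/andP [/andP [Qa Qb] Qc] Qd].
  + have Qu : ~~ isQ (f u).
      move: (N u a isT) (D u a isT) Qa.
      case: (f u) => [[q|j]|[l|[]]]; case: (f a) => [[q'|j']|[l'|[]]] //=.
      by rewrite /GH_adj /=; fin.
    have Qv : ~~ isQ (f v).
      move: (N v a isT) (D v a isT) Qa.
      case: (f v) => [[q|j]|[l|[]]]; case: (f a) => [[q'|j']|[l'|[]]] //=.
      by rewrite /GH_adj /=; fin.
    exact: (nonq Qu Qv Qc Qd (D u v isT) (D u c isT) (D u d isT) (D v c isT) (D v d isT)
      (A c d isT) (N u v isT) (N u c isT) (N u d isT) (N v c isT) (N v d isT)).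
  + have Qu : ~~ isQ (f u).
      move: (N u c isT) (D u c isT) Qc.
      case: (f u) => [[q|j]|[l|[]]]; case: (f c) => [[q'|j']|[l'|[]]] //=.
      by rewrite /GH_adj /=; fin.
    have Qv : ~~ isQ (f v).
      move: (N v c isT) (D v c isT) Qc.
      case: (f v) => [[q|j]|[l|[]]]; case: (f c) => [[q'|j']|[l'|[]]] //=.
      by rewrite /GH_adj /=; fin.
    exact: (nonq Qu Qv Qa Qb (D u v isT) (D u a isT) (D u b isT) (D v a isT) (D v b isT)
      (A a b isT) (N u v isT) (N u a isT) (N u b isT) (N v a isT) (N v b isT)).
- move=> [f [inj H]].
  have A x y : e_3P2 x y -> GH_adj S (f x) (f y) by rewrite -H.
  have N x y : ~~ e_3P2 x y -> ~~ GH_adj S (f x) (f y) by rewrite -H.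
  have D x y : x != y -> f x != f y by rewrite (inj_eq inj).
  pose a : V_3P2 := inl (inl ord0).
  pose b : V_3P2 := inl (inl ord_max).
  pose c : V_3P2 := inl (inr ord0).
  pose d : V_3P2 := inl (inr ord_max).
  pose e : V_3P2 := inr ord0.
  pose g : V_3P2 := inr ord_max.
  have := core (D a c isT) (D a d isT) (D b c isT) (D b d isT) (A a b isT) (A c d isT)
    (N a c isT) (N a d isT) (N b c isT) (N b d isT).
  have := core (D a e isT) (D a g isT) (D b e isT) (D b g isT) (A a b isT) (A e g isT)
    (N a e isT) (N a g isT) (N b e isT) (N b g isT).
  have := core (D c e isT) (D c g isT) (D d e isT) (D d g isT) (A c d isT) (A e g isT)
    (N c e isT) (N c g isT) (N d e isT) (N d g isT).
  by case: (isQ (f a)); case: (isQ (f b)); case: (isQ (f c)); case: (isQ (f d));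
     case: (isQ (f e)); case: (isQ (f g)).
- move=> [f [inj H]].
  have A x y : e_2P3 x y -> GH_adj S (f x) (f y) by rewrite -H.
  have N x y : ~~ e_2P3 x y -> ~~ GH_adj S (f x) (f y) by rewrite -H.
  have D x y : x != y -> f x != f y by rewrite (inj_eq inj).
  pose a : V_2P3 := inl (@Ordinal 3 0 isT).
  pose b : V_2P3 := inl (@Ordinal 3 1 isT).
  pose c : V_2P3 := inl (@Ordinal 3 2 isT).
  pose d : V_2P3 := inr (@Ordinal 3 0 isT).
  pose e : V_2P3 := inr (@Ordinal 3 1 isT).
  pose g : V_2P3 := inr (@Ordinal 3 2 isT).
  have := core (D a d isT) (D a e isT) (D b d isT) (D b e isT) (A a b isT) (A d e isT)
    (N a d isT) (N a e isT) (N b d isT) (N b e isT).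
  have := core (D a e isT) (D a g isT) (D b e isT) (D b g isT) (A a b isT) (A e g isT)
    (N a e isT) (N a g isT) (N b e isT) (N b g isT).
  have := core (D b d isT) (D b e isT) (D c d isT) (D c e isT) (A b c isT) (A d e isT)
    (N b d isT) (N b e isT) (N c d isT) (N c e isT).
  have := core (D b e isT) (D b g isT) (D c e isT) (D c g isT) (A b c isT) (A e g isT)
    (N b e isT) (N b g isT) (N c e isT) (N c g isT).
  have Nac := N a c isT. have Dac := D a c isT.
  have Ndf := N d g isT. have Ddf := D d g isT.
  move: Nac Dac Ndf Ddf.
  case: (f a) => [[qa|ja]|[la|[]]]; case: (f c) => [[qc|jc]|[lc|[]]];
  case: (f d) => [[qd|jd]|[ld|[]]]; case: (f g) => [[qg|jg]|[lg|[]]] => //=;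
  try (by case: (isQ (f b)); case: (isQ (f e)));
  rewrite /GH_adj /=; fin.
Qed.
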